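(* Let $F$ be a positive integer. The directed graph $\mathrm{G}(\mathcal{I}(F))$ is a tree with root $\mathrm{C}(F)$. Moreover, for $S\in\mathcal{I}(F)$, the children of $S$ in $\mathrm{G}(\mathcal{I}(F))$ are exactly the semigroups $(S\setminus\{x\})\cup\{F-x\}$ where $x$ ranges over the minimal generators of $S$ satisfying: (1) $\frac{F}{2}<x<F$; (2) $2x-F\notin S$; (3) $3x\neq 2F$; (4) $4x\neq 3F$; (5) $F-x<\mathrm{m}(S)$.
   Context: A numerical semigroup is a subset $S\subseteq\mathbb{N}$ (with $\mathbb{N}$ the set of nonnegative integers) closed under addition, containing $0$, with $\mathbb{N}\setminus S$ finite. Its Frobenius number is the largest integer not in $S$; its multiplicity $\mathrm{m}(S)$ is the smallest positive integer in $S$; its minimal generators are the elements of its unique minimal system of generators. A numerical semigroup is irreducible if it cannot be expressed as the intersection of two numerical semigroups properly containing it. $\mathcal{I}(F)$ denotes the set of irreducible numerical semigroups with Frobenius number $F$. $\mathrm{C}(F)=\{0\}\cup\{z\in\mathbb{Z}: z\ge\lceil\frac{F+1}{2}\rceil\}\setminus\{F\}$. The directed graph $\mathrm{G}(\mathcal{I}(F))$ has vertex set $\mathcal{I}(F)$, and $(T,S)$ is an edge iff $\mathrm{m}(T)<\frac{F}{2}$ and $S=(T\setminus\{\mathrm{m}(T)\})\cup\{F-\mathrm{m}(T)\}$. A directed graph is a tree with root $r$ if for every vertex $v\neq r$ there is a unique path (sequence of distinct edges $(v_0,v_1),\dots,(v_{n-1},v_n)$ with $v_0=v$, $v_n=r$)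 from $v$ to $r$. If $(v,w)$ is an edge, $v$ is called a child of $w$. *)

(* Defs.v *)
From mathcomp Require Import all_boot.
Set Implicit Arguments. Unset Strict Implicit. Unset Printing Implicit Defensive.

Definition nset := nat -> bool.

Definition is_numsg (S : nset) : Prop :=
  S 0 /\ (forall x y, S x -> S y -> S (x + y)) /\ exists N, forall n, N <= n -> S n.

Definition frobenius (S : nset) (F : nat) : Prop :=
  ~~ S F /\ forall n, F < n -> S n.

Definition multiplicity (S : nset) (m : nat) : Prop :=
  0 < m /\ S m /\ forall k, 0 < k -> k < m -> ~~ S k.

Inductive gen (A : nset) : nat -> Prop :=
| gen0 : gen A 0
| genS a n : A a -> gen A n -> gen A (a + n).

Definition generates (A S : nset) : Prop := forall n, S n <-> gen A n.

Definition min_gen_system (S A : nset) : Prop :=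
  generates A S /\
  forall B : nset, (forall x, B x -> A x) -> (exists x, A x /\ ~~ B x) -> ~ generates B S.

Definition minimal_generator (S : nset) (x : nat) : Prop :=
  exists A, min_gen_system S A /\ A x.

Definition subset (S T : nset) : Prop := forall z, S z -> T z.

Definition irreducible (S : nset) : Prop :=
  is_numsg S /\
  ~ exists S1 S2 : nset, is_numsg S1 /\ is_numsg S2 /\
      subset S S1 /\ S <> S1 /\ subset S S2 /\ S <> S2 /\
      S = (fun z => S1 z && S2 z).

Definition IF (F : nat) (S : nset) : Prop := irreducible S /\ frobenius S F.

(* C(F) = {0} ∪ {z >= ceil((F+1)/2)} \ {F};  ceil((F+1)/2) = (F+2)/2 *)
Definition CF (F : nat) : nset :=
  fun z => (z == 0) || ((F.+2)./2 <= z) && (z != F).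

Definition swap (T : nset) (a b : nat) : nset :=
  fun z => (T z && (z != a)) || (z == b).

Definition edge (F : nat) (T S : nset) : Prop :=
  IF F T /\ IF F S /\
  exists m, multiplicity T m /\ 2 * m < F /\ S = swap T m (F - m).

(* q is (the tail of) a path v = v0, v1, ..., vn = r through distinct edges:
   the vertex sequence is v :: q *)
Definition is_path (T : Type) (E : T -> T -> Prop) (v r : T) (q : seq T) : Prop :=
  let p := v :: q in
  last v q = r /\
  (forall i, i.+1 < size p -> E (nth v p i) (nth v p i.+1)) /\
  (forall i j, i < j -> j.+1 < size p ->
     (nth v p i, nth v p i.+1) <> (nth v p j, nth v p j.+1)).

Definition is_tree (T : Type) (V : T -> Prop) (E : T -> T -> Prop) (r : T) : Prop :=
  V r /\ forall v, V v -> v <> r -> exists! q, is_path E v r q.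

(* Main.v *)
Require Import Defs.
From mathcomp Require Import all_boot zify.
From Stdlib Require Import FunctionalExtensionality Classical.
Set Implicit Arguments. Unset Strict Implicit.

Definition symF (F : nat) (S : nset) :=
  forall x, x < F -> 2 * x != F -> ~~ S x -> S (F - x).

Lemma nsg_eqS (S : nset) a b : a = b -> S a -> S b.
Proof. by move=> ->. Qed.

Lemma IF_sym F S : IF F S -> symF F S.
Proof.
move=> [[nS irr] [nF hF]] x xF x2 nSx.
apply/negPn/negP => nSFx.
have [S0 [Sadd [N HN]]] := nS.
pose P y := [&& y < F, ~~ S y, ~~ S (F - y) & 2 * y != F].
have exP : exists y, P y by exists x; apply/and4P; split=> //; apply/negP.
have bP : forall y, P y -> y <= F by move=> y /and4P [? _ _ _]; lia.
case: (ex_maxnP exP bP) => h Ph hmax.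
move: (Ph) => /and4P [hF' nSh nSFh h2].
have h0 : 0 < h by case: h {Ph hmax hF' h2 nSFh} nSh => //; rewrite S0.
have hgt : F < 2 * h.
  have : F - h <= h.
    apply: hmax; rewrite /P; apply/and4P; split=> //; first by lia.
    have -> : F - (F - h) = h by lia.
    done.
    by apply/eqP; move/eqP: h2; lia.
  move/eqP: h2; lia.
have hS : forall b, S b -> 0 < b -> S (h + b).
  move=> b Sb b0.
  case: (ltngtP F (h + b)) => c.
  - by apply: hF.
  - apply/negPn/negP => nShb.
    have : h + b <= h.
      apply: hmax; rewrite /P; apply/and4P; split=> //.
      + apply/negP => SF; move/negP: nSFh; apply.
        have -> : F - h = (F - (h + b)) + b by lia.
        exact: Sadd.
      + by apply/eqP; lia.
    lia.
  - case/negP: nSFh; have -> : F - h = b by lia.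
    done.
apply: irr.
exists (fun z => S z || (z == h)), (fun z => S z || (z == F)).
split; [|split; [|split; [|split; [|split; [|split]]]]].
- split; first by rewrite S0.
  split; last by exists N => n /HN ->.
  move=> a b /orP [Sa|/eqP ->] /orP [Sb|/eqP ->].
  + by rewrite Sadd.
  + case: a Sa => [|a] Sa; first by rewrite add0n eqxx orbT.
    by rewrite addnC hS.
  + case: b Sb => [|b] Sb; first by rewrite addn0 eqxx orbT.
    by rewrite hS.
  + by rewrite hF //; lia.
- split; first by rewrite S0.
  split; last by exists N => n /HN ->.
  move=> a b /orP [Sa|/eqP ->] /orP [Sb|/eqP ->].
  + by rewrite Sadd.
  + case: a Sa => [|a] Sa; first by rewrite add0n eqxx orbT.
    by rewrite hF //; lia.
  + case: b Sb => [|b] Sb; first by rewrite addn0 eqxx orbT.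
    by rewrite hF //; lia.
  + by rewrite hF //; lia.
- by move=> z ->.
- move=> e; move: nSh; rewrite e /= eqxx orbT //.
- by move=> z ->.
- move=> e; move: nF; rewrite e /= eqxx orbT //.
- apply: functional_extensionality => z.
  case Sz: (S z) => //=.
  case: (eqVneq z h) => [->|zh] /=; last by [].
  by apply/esym/eqP; lia.
Qed.

Lemma sym_max F S T : is_numsg S -> frobenius S F -> symF F S ->
  is_numsg T -> Defs.subset S T -> ~~ T F -> T = S.
Proof.
move=> [S0 [Sadd _]] [nF hF] sy [T0 [Tadd _]] sub nTF.
apply: functional_extensionality => z.
apply/idP/idP; last by apply: sub.
move=> Tz; apply/negPn/negP => nSz.
case: (ltngtP F z) => c.
- by move/negP: nSz; apply; apply: hF.
- case: (eqVneq (2 * z) F) => e.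
  + move/negP: nTF; apply; have -> : F = z + z by lia.
    by apply: Tadd.
  + move/negP: nTF; apply; have -> : F = z + (F - z) by lia.
    by apply: Tadd => //; apply: sub; apply: sy.
- by rewrite c Tz in nTF.
Qed.

Lemma IF_char F S : IF F S <-> [/\ is_numsg S, frobenius S F & symF F S].
Proof.
split.
  move=> H; have := IF_sym H; case: H => [[? _] ?]; by split.
move=> [nS fS sy]; split=> //; split=> // [[S1 [S2 [n1 [n2 [s1 [e1 [s2 [e2 e]]]]]]]]].
have nF := fS.1.
case S1F: (S1 F).
- case S2F: (S2 F).
  + by move: nF; rewrite e /= S1F S2F.
  + by apply: e2; apply/esym; apply: (sym_max (F:=F)) => //; rewrite S2F.
- by apply: e1; apply/esym; apply: (sym_max (F:=F)) => //; rewrite S1F.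
Qed.

Lemma mult_ex S : is_numsg S -> exists m, multiplicity S m.
Proof.
move=> [S0 [_ [N HN]]].
have exP : exists k, (0 < k) && S k by exists N.+1; rewrite HN.
case: (ex_minnP exP) => m /andP [m0 Sm] mmin.
exists m; split=> //; split=> // k k0 km; apply/negP => Sk.
by have := mmin k; rewrite k0 Sk => /(_ isT); lia.
Qed.

Lemma mult_uniq S m1 m2 : multiplicity S m1 -> multiplicity S m2 -> m1 = m2.
Proof.
move=> [p1 [S1 h1]] [p2 [S2 h2]].
case: (ltngtP m1 m2) => // c.
- by move: (h2 _ p1 c); rewrite S1.
- by move: (h1 _ p2 c); rewrite S2.
Qed.

Lemma CF_IF F : 0 < F -> IF F (CF F).
Proof.
move=> F0; apply/IF_char; split.
- split; first by [].
  split; last by exists F.+1 => n Hn; rewrite /CF; apply/orP; right; apply/andP; split; lia.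
  move=> a b; rewrite /CF => /orP [/eqP ->|/andP [a1 a2]]; first by rewrite add0n.
  move=> /orP [/eqP ->|/andP [b1 b2]]; first by rewrite addn0 a1 a2 orbT.
  apply/orP; right; apply/andP; split; lia.
- split; first by rewrite /CF; apply/negP => /orP [/eqP|/andP [_ /eqP]]; lia.
  move=> n Hn; rewrite /CF; apply/orP; right; apply/andP; split; lia.
- move=> x xF x2; rewrite /CF => /norP [x0 /nandP [x1|x1]].
  + apply/orP; right; apply/andP; split; lia.
  + move/negPn: x1; lia.
Qed.

Lemma IF_facts F S : IF F S ->
  [/\ S 0, (forall a b, S a -> S b -> S (a + b)), ~~ S F,
      (forall n, F < n -> S n) & symF F S].
Proof. by move/IF_char => [[S0 [Sadd _]] [nF hF] sy]; split. Qed.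

Lemma notCF F T : 0 < F -> IF F T -> T <> CF F -> exists m, multiplicity T m /\ 2 * m < F.
Proof.
move=> F0 IT neq.
have [m Hm] := mult_ex (proj1 (proj1 IT)).
exists m; split=> //.
case: (ltnP (2 * m) F) => // c; exfalso; apply: neq.
have [T0 Tadd nTF hTF sy] := IF_facts IT.
have [m0 [Tm hm]] := Hm.
apply: functional_extensionality => z; rewrite /CF.
case: (posnP z) => [->|z0]; first by rewrite T0.
case: (ltngtP F z) => c2.
- rewrite hTF //; apply/esym/orP; right; apply/andP; split; lia.
- case: (ltnP F (2 * z)) => c3.
  + rewrite /= andbT; have -> : (F.+2)./2 <= z by lia.
    apply/negPn/negP => nTz.
    have := sy z c2 ltac:(apply/eqP; lia) nTz.
    by have := hm (F - z) ltac:(lia) ltac:(lia) => /negbTE ->.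
  + rewrite /= andbT.
    have -> : ((F.+2)./2 <= z) = false by apply/negbTE; rewrite -ltnNge; lia.
    apply/negbTE/negP => Tz.
    case: (ltnP z m) => c4; first by move: (hm z z0 c4); rewrite Tz.
    case/negP: nTF; have -> : F = z + z by lia.
    exact: Tadd.
- by rewrite -c2 (negbTE nTF) andbF.
Qed.

Lemma swap_IF F T m : IF F T -> multiplicity T m -> 2 * m < F ->
  IF F (swap T m (F - m)).
Proof.
move=> IT [m0 [Tm hm]] m2.
have [T0 Tadd nTF hTF sy] := IF_facts IT.
have nTFm : ~~ T (F - m).
  apply/negP => TFm; case/negP: nTF.
  have -> : F = (F - m) + m by lia.
  exact: Tadd.
have Tge : forall b, T b -> 0 < b -> m <= b.
  move=> b Tb b0; case: (ltnP b m) => // c; by move: (hm b b0 c); rewrite Tb.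
apply/IF_char; split.
- split; first by rewrite /swap T0 /=; apply/orP; left; apply/eqP; lia.
  split; last first.
    exists F.+1 => n Hn; rewrite /swap hTF /=; last lia.
    by apply/orP; left; apply/eqP; lia.
  move=> a b; rewrite /swap.
  move=> /orP [/andP [Ta /eqP am]|/eqP ->] /orP [/andP [Tb /eqP bm]|/eqP ->].
  + case: (posnP a) => [a0|a0].
      by rewrite a0 add0n Tb /=; apply/orP; left; apply/eqP.
    case: (posnP b) => [b0|b0].
      by rewrite b0 addn0 Ta /=; apply/orP; left; apply/eqP.
    have := Tge a Ta a0; have := Tge b Tb b0 => *.
    rewrite Tadd //=; apply/orP; left; apply/eqP; lia.
  + case: (posnP a) => [a0|a0]; first by rewrite a0 add0n eqxx orbT.
    have := Tge a Ta a0 => *.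
    rewrite hTF /=; last lia. apply/orP; left; apply/eqP; lia.
  + case: (posnP b) => [b0|b0]; first by rewrite b0 addn0 eqxx orbT.
    have := Tge b Tb b0 => *.
    rewrite hTF /=; last lia. apply/orP; left; apply/eqP; lia.
  + rewrite hTF /=; last lia. apply/orP; left; apply/eqP; lia.
- split.
  + rewrite /swap (negbTE nTF) /=; apply/eqP; lia.
  + move=> n Hn; rewrite /swap hTF /=; last lia.
    by apply/orP; left; apply/eqP; lia.
- move=> x xF x2; rewrite /swap => /norP [/nandP [nTx|/negPn/eqP xm] /eqP xFm].
  + rewrite sy //=; apply/orP; left; apply/eqP; lia.
  + by rewrite xm eqxx orbT.
Qed.

Section Paths.
Variable (T : Type) (E : T -> T -> Prop) (r : T).

Lemma nthD (a b : T) s i : i < size s -> nth a s i = nth b s i.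
Proof. exact: set_nth_default. Qed.

Lemma path_tail v w q : is_path E v r (w :: q) -> is_path E w r q.
Proof.
move=> [hl [he hd]]; split; first by [].
split.
- move=> i hi.
  have h : E (nth v (w :: q) i) (nth v (w :: q) i.+1) := he i.+1 ltac:(simpl in *; lia).
  rewrite (nthD v w (s := w :: q) (i := i)) in h; last by simpl in *; lia.
  rewrite (nthD v w (s := w :: q) (i := i.+1)) in h; last by simpl in *; lia.
  exact h.
- move=> i j ij hj.
  have h : (nth v (w :: q) i, nth v (w :: q) i.+1) <> (nth v (w :: q) j, nth v (w :: q) j.+1)
    := hd i.+1 j.+1 ij ltac:(simpl in *; lia).
  rewrite (nthD v w (s := w :: q) (i := i)) in h; last by simpl in *; lia.
  rewrite (nthD v w (s := w :: q) (i := i.+1)) in h; last by simpl in *; lia.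
  rewrite (nthD v w (s := w :: q) (i := j)) in h; last by simpl in *; lia.
  rewrite (nthD v w (s := w :: q) (i := j.+1)) in h; last by simpl in *; lia.
  exact h.
Qed.

Lemma path_uniq (func : forall a b c, E a b -> E a c -> b = c)
  (noroot : forall b, ~ E r b) :
  forall q1 q2 v, is_path E v r q1 -> is_path E v r q2 -> q1 = q2.
Proof.
elim=> [|w1 q1 IH] [|w2 q2] v //.
- move=> [/= e1 _] [_ [he _]]; have := he 0 isT; rewrite /= e1.
  by move/noroot.
- move=> [_ [he _]] [/= e1 _]; have := he 0 isT; rewrite /= e1.
  by move/noroot.
- move=> p1 p2.
  have e : w1 = w2.
    apply: (func v); [exact: (p1.2.1 0 isT) | exact: (p2.2.1 0 isT)].
  subst w2; congr (_ :: _); apply: (IH _ w1); [exact: path_tail p1 | exact: path_tail p2].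
Qed.

Lemma path_cons v w q : E v w -> is_path E w r q ->
  (forall j, j < size (w :: q) -> nth w (w :: q) j <> v) ->
  is_path E v r (w :: q).
Proof.
move=> evw [hl [he hd]] hne; split; first by [].
split.
- case=> [|i] hi; first by [].
  have h := he i ltac:(simpl in *; lia).
  change (E (nth v (w :: q) i) (nth v (w :: q) i.+1)).
  rewrite (nthD v w (s := w :: q) (i := i)); last by simpl in *; lia.
  rewrite (nthD v w (s := w :: q) (i := i.+1)); last by simpl in *; lia.
  exact h.
- case=> [|i] [|j] ij hj //.
  + change ((v, nth v (w :: q) 0) <> (nth v (w :: q) j, nth v (w :: q) j.+1)).
    rewrite (nthD v w (s := w :: q) (i := j)); last by simpl in *; lia.
    move=> [e _]; apply: (hne j); [simpl in *; lia | by rewrite e].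
  + have h := hd i j ij ltac:(simpl in *; lia).
    change ((nth v (w :: q) i, nth v (w :: q) i.+1) <> (nth v (w :: q) j, nth v (w :: q) j.+1)).
    rewrite (nthD v w (s := w :: q) (i := i)); last by simpl in *; lia.
    rewrite (nthD v w (s := w :: q) (i := i.+1)); last by simpl in *; lia.
    rewrite (nthD v w (s := w :: q) (i := j)); last by simpl in *; lia.
    rewrite (nthD v w (s := w :: q) (i := j.+1)); last by simpl in *; lia.
    exact h.
Qed.
End Paths.

Definition mu (F : nat) (T : nset) := count (fun x => T x && (2 * x < F)) (iota 0 F).

Lemma count_lt (P Q : pred nat) s y : (forall x, P x -> Q x) -> y \in s -> Q y -> ~~ P y ->
  count P s < count Q s.
Proof.
move=> PQ; elim: s => [|a s IH] //= ys Qy nPy.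
move: ys; rewrite in_cons => /orP [/eqP e|ys].
- rewrite -e Qy (negbTE nPy) add0n add1n ltnS; exact: sub_count.
- have := IH ys Qy nPy.
  have : P a <= Q a by case Pa: (P a) => //=; rewrite PQ.
  lia.
Qed.

Lemma mu_swap F T m : multiplicity T m -> 2 * m < F ->
  mu F (swap T m (F - m)) < mu F T.
Proof.
move=> [m0 [Tm _]] m2; rewrite /mu.
apply: (count_lt (y := m)).
- move=> x /andP [/orP [/andP [Tx _]|/eqP xe] x2]; first by rewrite Tx x2.
  exfalso; lia.
- by rewrite mem_iota; lia.
- by rewrite Tm; lia.
- rewrite /swap eqxx andbF /=; apply/negP => /andP [/eqP h _]; lia.
Qed.

Lemma edge_fun F a b c : edge F a b -> edge F a c -> b = c.
Proof.
move=> [_ [_ [m [Hm [_ ->]]]]] [_ [_ [m' [Hm' [_ ->]]]]].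
by rewrite (mult_uniq Hm Hm').
Qed.

Lemma no_edge_root F b : ~ edge F (CF F) b.
Proof.
move=> [_ [_ [m [[m0 [Cm _]] [m2 _]]]]].
move: Cm; rewrite /CF => /orP [/eqP|/andP [h _]]; lia.
Qed.

Lemma exist_path F (F0 : 0 < F) n : forall v, mu F v <= n -> IF F v -> v <> CF F ->
  exists q, is_path (edge F) v (CF F) q /\
            forall j, mu F (nth v (v :: q) j) <= mu F v.
Proof.
elim: n => [|n IH] v hv Iv nv;
  have [m [Hm m2]] := notCF F0 Iv nv;
  set w := swap v m (F - m);
  have Iw : IF F w := swap_IF Iv Hm m2;
  have evw : edge F v w by (split; [|split]; [| |exists m]).
- have := mu_swap Hm m2; lia.
- have muw := mu_swap Hm m2; rewrite -/w in muw.
  have wv : forall u, mu F u <= mu F w -> u <> v by move=> u hu e; subst u; lia.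
  case: (classic (w = CF F)) => [wC|wC].
  + exists [:: w]; split.
      apply: path_cons => //.
      move=> [|j] //= _; apply: wv; lia.
    move=> [|[|j]] //=; [exact: ltnW | by rewrite nth_nil].
  + have hw : mu F w <= n by lia.
    have [q [pq bq]] := IH w hw Iw wC.
    exists (w :: q); split.
      apply: path_cons => // j _; apply: wv; exact: bq.
    move=> [|j] //=.
    case: (ltnP j (size (w :: q))) => c.
      rewrite (nthD v w c); have := bq j; lia.
    by rewrite nth_default.
Qed.

Theorem tree_part F (F0 : 0 < F) : is_tree (IF F) (edge F) (CF F).
Proof.
split; first exact: CF_IF.
move=> v Iv nv.
have [q [P _]] := exist_path F0 (leqnn (mu F v)) Iv nv.
exists q; split => // q' P'.
apply: (path_uniq (@edge_fun F) (@no_edge_root F) P P').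
Qed.

Lemma gen_add A n k : gen A n -> gen A k -> gen A (n + k).
Proof.
move=> gn gk; elim: gn => [|a n' An gn IH]; first by rewrite add0n.
rewrite -addnA; exact: genS.
Qed.

Lemma gen_mono (A B : nset) n : (forall z, A z -> B z) -> gen A n -> gen B n.
Proof. move=> AB; elim=> [|a n' Aa _ IH]; [exact: gen0 | exact: genS (AB _ Aa) IH]. Qed.

Lemma mingen_irred S x : minimal_generator S x ->
  S x /\ forall a b, S a -> S b -> a + b = x -> a = 0 \/ b = 0.
Proof.
move=> [A [[genA minA] Ax]].
have Sx : S x by apply/genA; rewrite -[x]addn0; apply: genS => //; exact: gen0.
split=> // a b Sa Sb ab.
case: (posnP a) => [->|a0]; first by left.
case: (posnP b) => [->|b0]; first by right.
exfalso.
pose B z := A z && (z != x).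
apply: (minA B); first by move=> z /andP [].
  by exists x; split=> //; rewrite /B eqxx andbF.
have small : forall y, gen A y -> y < x -> gen B y.
  move=> y; elim=> [|c n' Ac gn IH] lt; first exact: gen0.
  apply: genS; last by apply: IH; lia.
  by rewrite /B Ac /=; apply/eqP; lia.
have gBx : gen B x.
  rewrite -ab; apply: gen_add; apply: small; try lia; exact/genA.
have big : forall y, gen A y -> gen B y.
  move=> y; elim=> [|c n' Ac gn IH]; first exact: gen0.
  case: (eqVneq c x) => [->|cx]; first exact: gen_add.
  by apply: genS => //; rewrite /B Ac.
move=> n; split.
- by move/genA/big.
- by move=> g; apply/genA; apply: (gen_mono _ g) => z /andP [].
Qed.

Lemma mingen_of_irred S x : is_numsg S -> S x -> 0 < x ->
  (forall a b, S a -> S b -> a + b = x -> a = 0 \/ b = 0) -> minimal_generator S x.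
Proof.
move=> [S0 [Sadd _]] Sx x0 irr.
pose A z := [&& 0 < z, S z & ~~ has (fun a => (0 < a) && S a && S (z - a)) (iota 0 z)].
have SA : forall n, gen A n -> S n.
  move=> n; elim=> // c n' Ac _ IH; apply: Sadd => //.
  by move: Ac; rewrite /A => /and3P [].
have AS : forall n, S n -> gen A n.
  elim/ltn_ind => n IH Sn.
  case: (posnP n) => [->|n0]; first exact: gen0.
  case hA: (has (fun a => (0 < a) && S a && S (n - a)) (iota 0 n)).
  - case/hasP: hA => a; rewrite mem_iota => ai /andP [/andP [a0 Sa] Sna].
    have -> : n = a + (n - a) by lia.
    apply: gen_add; apply: IH => //; lia.
  - rewrite -[n]addn0; apply: genS; last exact: gen0.
    by rewrite /A n0 Sn hA.
exists A; split; last first.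
  rewrite /A x0 Sx /=; apply/hasP => [[a]]; rewrite mem_iota => ai /andP [/andP [a0 Sa] Sxa].
  have := irr a (x - a) Sa Sxa ltac:(lia); lia.
split; first by move=> n; split; [exact: AS | exact: SA].
move=> B BA [y [Ay nBy]] gB.
have /gB gy : S y by move: Ay => /and3P [].
move: Ay => /and3P [y0 Sy nh].
inversion gy as [e|c n' Bc gn e]; first by subst; rewrite ltnn in y0.
have /and3P [c0 Sc _] := BA _ Bc.
have Sn' : S n' by apply/gB.
case: (posnP n') => n0.
  by subst; rewrite addn0 Bc in nBy.
case/hasP: nh; exists c; first by rewrite mem_iota; lia.
by rewrite c0 Sc /=; rewrite -e; have -> : c + n' - c = n' by lia.
Qed.

Lemma children_fwd F S T : 0 < F -> edge F T S ->
      exists x, minimal_generator S x /\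
                (F < 2 * x /\ x < F) /\
                ~~ S (2 * x - F) /\
                3 * x <> 2 * F /\
                4 * x <> 3 * F /\
                (exists m, multiplicity S m /\ F - x < m) /\
                T = swap S x (F - x).
Proof.
move=> F0 [IT [IS [m [Hm [m2 eS]]]]].
have [T0 Tadd nTF hTF sy] := IF_facts IT.
have [m0 [Tm hm]] := Hm.
have nTFm : ~~ T (F - m).
  apply/negP => TFm; case/negP: nTF.
  have -> : F = (F - m) + m by lia.
  exact: Tadd.
have Tge : forall b, T b -> 0 < b -> m <= b.
  move=> b Tb b0; case: (ltnP b m) => // c; by move: (hm b b0 c); rewrite Tb.
have nS := proj1 (proj1 IS).
subst S.
exists (F - m); split; [|split; [lia|split; [|split; [|split; [|split]]]]].
- apply: mingen_of_irred => //; first by rewrite /swap eqxx orbT.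
    lia.
  move=> a b; rewrite /swap => Sa Sb ab.
  case: (posnP a) => [->|a0]; first by left.
  case: (posnP b) => [->|b0]; first by right.
  exfalso.
  move: Sa => /orP [/andP [Ta _]|/eqP ae]; last lia.
  move: Sb => /orP [/andP [Tb _]|/eqP be]; last lia.
  by case/negP: nTFm; rewrite -ab; apply: Tadd.
- rewrite /swap; apply/negP => /orP [/andP [Tx _]|/eqP e]; last lia.
  case/negP: nTFm; have -> : F - m = (2 * (F - m) - F) + m by lia.
  exact: Tadd.
- move=> e; case/negP: nTFm; have -> : F - m = m + m by lia.
  exact: Tadd.
- move=> e; case/negP: nTFm; have -> : F - m = m + (m + m) by lia.
  exact: (Tadd _ _ Tm (Tadd _ _ Tm Tm)).
- have [m' Hm'] := mult_ex nS.
  exists m'; split=> //.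
  have [m'0 [Sm' _]] := Hm'.
  case: (ltnP m m') => c; first lia.
  exfalso; move: Sm'; rewrite /swap => /orP [/andP [Tm' /eqP nm]|/eqP e]; last lia.
  have := Tge _ Tm' m'0; lia.
- apply: functional_extensionality => z.
  have -> : F - (F - m) = m by lia.
  rewrite /swap.
  case: (eqVneq z m) => [->|zm]; first by rewrite Tm orbT.
  case: (eqVneq z (F - m)) => [->|zFm] /=; first by rewrite (negbTE nTFm).
  by rewrite !andbT !orbF.
Qed.

Lemma children_bwd F S T : 0 < F -> IF F S ->
      (exists x, minimal_generator S x /\
                (F < 2 * x /\ x < F) /\
                ~~ S (2 * x - F) /\
                3 * x <> 2 * F /\
                4 * x <> 3 * F /\
                (exists m, multiplicity S m /\ F - x < m) /\
                T = swap S x (F - x)) -> edge F T S.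
Proof.
move=> F0 IS [x [mg [[x1 x2] [n2x [n3 [n4 [[mS [[mS0 [SmS hmS]] lt]] eT]]]]]]].
have [S0 Sadd nSF hSF syS] := IF_facts IS.
have [Sx irrx] := mingen_irred mg.
have nSm : ~~ S (F - x) by apply: hmS; lia.
have S2 : forall b, S b -> ~~ S (b + b) -> False.
  by move=> b Sb /negP; apply; apply: Sadd.
have hmb : forall b, S b -> b != x -> swap S x (F - x) ((F - x) + b).
  move=> b Sb /eqP bx; rewrite /swap.
  case: (posnP b) => [->|b0]; first by rewrite addn0 eqxx orbT.
  have bge : mS <= b by case: (ltnP b mS) => // c; move: (hmS b b0 c); rewrite Sb.
  apply/orP; left; apply/andP; split; last first.
    apply/eqP => e; case/negP: n2x; have -> : 2 * x - F = b by lia.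
    done.
  case: (ltngtP F (F - x + b)) => c.
  - by apply: hSF.
  - apply/negPn/negP => nS.
    case: (eqVneq (2 * (F - x + b)) F) => e.
      apply: (S2 b Sb); by have <- : 2 * x - F = b + b by lia.
    have := syS _ c e nS.
    have -> : F - (F - x + b) = x - b by lia.
    move=> Sxb; have := irrx (x - b) b Sxb Sb ltac:(lia); lia.
  - exfalso; lia.
subst T.
split; first last; first split=> //.
  exists (F - x); split; last split; [|lia|].
  - split; first lia. split; first by rewrite /swap eqxx orbT.
    move=> k k0 kl; rewrite /swap; apply/norP; split.
      by rewrite negb_and (hmS k k0 ltac:(lia)).
    apply/eqP; lia.
  - apply: functional_extensionality => z.
    have -> : F - (F - x) = x by lia.
    rewrite /swap.
    case: (eqVneq z x) => [->|zx]; first by rewrite Sx orbT.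
    case: (eqVneq z (F - x)) => [->|zFx] /=; first by rewrite (negbTE nSm).
    by rewrite !andbT !orbF.
apply/IF_char; split.
- split; first by rewrite /swap S0 /=; apply/orP; left; apply/eqP; lia.
  split; last first.
    exists F.+1 => n Hn; rewrite /swap hSF /=; last lia.
    by apply/orP; left; apply/eqP; lia.
  move=> a b; rewrite {1 2}/swap.
  move=> /orP [/andP [Sa ax]|/eqP ->] /orP [/andP [Sb bx]|/eqP ->].
  + rewrite /swap Sadd //=; apply/orP; left; apply/eqP => e.
    have := irrx a b Sa Sb e; move: ax bx => /eqP ax /eqP bx.
    case=> h; subst; [rewrite add0n in ax|rewrite addn0 in ax]; by apply: ax.
  + by rewrite addnC; apply: hmb.
  + exact: hmb.
  + rewrite /swap; apply/orP; left; apply/andP; split; last by apply/eqP; lia.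
    apply/negPn/negP => nS.
    have e : 2 * (F - x + (F - x)) != F by apply/eqP; lia.
    have := syS (F - x + (F - x)) ltac:(lia) e nS.
    have -> : F - (F - x + (F - x)) = 2 * x - F by lia.
    by rewrite (negbTE n2x).
- split.
  + rewrite /swap (negbTE nSF) /=; apply/eqP; lia.
  + move=> n Hn; rewrite /swap hSF /=; last lia.
    by apply/orP; left; apply/eqP; lia.
- move=> y yF y2; rewrite /swap => /norP [/nandP [nSy|/negPn/eqP yx] /eqP yFx].
  + rewrite syS //=; apply/orP; left; apply/eqP; lia.
  + by rewrite yx eqxx orbT.
Qed.

Theorem theorem9 (F : nat) (hF : 0 < F) :
  is_tree (IF F) (edge F) (CF F) /\
  forall S : nset, IF F S ->
    forall T : nset,
      edge F T S <->
      exists x, minimal_generator S x /\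
                (F < 2 * x /\ x < F) /\
                ~~ S (2 * x - F) /\
                3 * x <> 2 * F /\
                4 * x <> 3 * F /\
                (exists m, multiplicity S m /\ F - x < m) /\
                T = swap S x (F - x).
Proof.
split; first exact: tree_part.
move=> S IS T; split; [exact: children_fwd | exact: children_bwd].
Qed.
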